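(* Consider the status-update system described in the context. For every slot $t$ (whenever the conditioning events involved have positive probability), the belief $\beta(t+1)=(\beta_0(t+1),\dots,\beta_B(t+1))^{\mathrm T}$ about the battery level is obtained from $\beta(t)$, the action $a(t)$ and the new observation $o(t+1)=(r(t+1),\Delta(t+1),\tilde b(t+1))$ as \[ \beta(t+1)=\begin{cases} \boldsymbol{\Lambda}\beta(t), & a(t)=0,\\ \rho^{0}, & a(t)=1,\ \Delta(t+1)>1,\\ \rho^{j}, & a(t)=1,\ \Delta(t+1)=1,\ \tilde b(t+1)=j,\quad j\in\{1,\dots,B\}, \end{cases} \] where $\boldsymbol{\Lambda}\in[0,1]^{(B+1)\times(B+1)}$ is the left stochastic matrix (rows and columns indexed by $0,\dots,B$) with entries $\Lambda_{j,j}=1-\lambda$ and $\Lambda_{j+1,j}=\lambda$ for $j=0,\dots,B-1$, $\Lambda_{B,B}=1$, and all other entries $0$; and the vectors $\rho^j\in[0,1]^{B+1}$ are $\rho^0=\rho^1=(1-\lambda,\lambda,0,\dots,0)^{\mathrm T}$ and, for $j=1,\dots,B$, $\rho^j$ has entry $1-\lambda$ at index $j-1$, entry $\lambda$ at index $j$, and zeros elsewhere (indices $0,\dots,B$).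
   Context: Time is slotted, $t=1,2,\dots$. A sensor has a battery of capacity $B\in\{1,2,\dots\}$ units, with level $b(t)\in\{0,\dots,B\}$ at the beginning of slot $t$. Energy arrivals $e(t)\in\{0,1\}$ are i.i.d. Bernoulli with $\Pr(e(t)=1)=\lambda$; requests $r(t)\in\{0,1\}$ are i.i.d. Bernoulli with $\Pr(r(t)=1)=p$; the two processes are independent of each other and of everything else. At each slot an edge node chooses an action $a(t)\in\{0,1\}$ (command the sensor to send an update or not); the sensor sends an update iff $d(t)=a(t)\mathbf 1_{\{b(t)\ge 1\}}=1$, and $b(t+1)=\min\{b(t)+e(t)-d(t),B\}$. The age of information $\Delta(t)\in\{1,\dots,\Delta^{\max}\}$ (with $\Delta^{\max}\ge 2$ an integer) evolves as $\Delta(t+1)=1$ if $d(t)=1$ and $\Delta(t+1)=\min\{\Delta(t)+1,\Delta^{\max}\}$ if $d(t)=0$. Each received update carries the sensor's battery level at the slot it was sent, so the edge node's partial battery knowledge $\tilde b(t)\in\{1,\dots,B\}$ evolves as $\tilde b(t+1)=b(t)$ if $d(t)=1$ and $\tilde b(t+1)=\tilde b(t)$ if $d(t)=0$. The edge node observes $o(t)=(r(t),\Delta(t),\tilde b(t))$ but not $b(t)$. The complete information state $\phi^{c}(t)$ consists of an initial probability distribution over the states together with $o(1),\dots,o(t),a(1),\dots,a(t-1)$; the action $a(t)$ is a (possibly randomized, with randomization independent of everything else) function of $\phi^c(t)$. The belief is $\beta_j(t)=\Pr(b(t)=j\mid \phi^{c}(t))$, $j=0,\dots,B$. *)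

(* Defs.v *)
(* Explicit discrete construction of the law of the
   status-update process over a finite horizon N (slots 1..N). *)
From mathcomp Require Import all_boot all_order all_algebra.
Set Implicit Arguments.
Unset Strict Implicit.
Unset Printing Implicit Defensive.
Import Order.TTheory GRing.Theory Num.Theory.
Local Open Scope ring_scope.

(* observation o = (r, Delta, btilde) *)
Definition obs := (bool * nat * nat)%type.
(* hidden+observable state (b, Delta, btilde) *)
Definition sstate := (nat * nat * nat)%type.

Section Model.
Variable R : realFieldType.
Variables (B Dmax : nat) (lam p : R).

(* Finite type encoding the initial state: (b, Delta-1, btilde-1),
   i.e. b in {0..B}, Delta in {1..Dmax}, btilde in {1..B}. *)
Definition S0 := ('I_B.+1 * 'I_Dmax * 'I_B)%type.
Definition decode (x : S0) : sstate :=
  (nat_of_ord x.1.1, (nat_of_ord x.1.2).+1, (nat_of_ord x.2).+1).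

Definition bern (q : R) (x : bool) : R := if x then q else 1 - q.

(* one-slot dynamics: action a(t), energy arrival e(t) *)
Definition step (s : sstate) (a e : bool) : sstate :=
  let: (b, D, bt) := s in
  let d := a && (0 < b)%N in
  (minn (b + e - d) B, (if d then 1 else minn D.+1 Dmax)%N, if d then b else bt).

(* state at (0-based) slot k, i.e. at slot t = k+1 *)
Definition state (x0 : sstate) (acts ens : seq bool) (k : nat) : sstate :=
  foldl (fun s i => step s (nth false acts i) (nth false ens i)) x0 (iota 0 k).

(* Sample space for horizon N: initial state, energy arrivals e(1..N),
   requests r(1..N), actions a(1..N). *)
Definition Omega (N : nat) :=
  (S0 * N.-tuple bool * N.-tuple bool * N.-tuple bool)%type.

Definition om_x {N} (w : Omega N) := w.1.1.1.
Definition om_e {N} (w : Omega N) : seq bool := w.1.1.2.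
Definition om_r {N} (w : Omega N) : seq bool := w.1.2.
Definition om_a {N} (w : Omega N) : seq bool := w.2.

Definition om_state {N} (w : Omega N) (k : nat) : sstate :=
  state (decode (om_x w)) (om_a w) (om_e w) k.

(* observation o(k+1) *)
Definition om_obs {N} (w : Omega N) (k : nat) : obs :=
  (nth false (om_r w) k, (om_state w k).1.2, (om_state w k).2).

Definition obs_hist {N} (w : Omega N) (t : nat) : seq obs :=
  [seq om_obs w i | i <- iota 0 t].

Variable pi : S0 -> R.
Variable mu : seq obs -> seq bool -> R.     (* randomized policy: Pr(a(t)=1 | o(1..t), a(1..t-1)) *)

Definition weight {N} (w : Omega N) : R :=
  pi (om_x w) *
  \prod_(i < N) (bern lam (nth false (om_e w) i) * bern p (nth false (om_r w) i) *
                 bern (mu (obs_hist w i.+1) (take i (om_a w))) (nth false (om_a w) i)).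

(* Pr( o(1..t) = hobs, a(1..t-1) = ha, b(t) satisfies P ) *)
Definition joint (N t : nat) (hobs : seq obs) (ha : seq bool) (P : pred nat) : R :=
  \sum_(w : Omega N)
     if [&& obs_hist w t == hobs, take t.-1 (om_a w) == ha & P (om_state w t.-1).1.1]
     then weight w else 0.

Definition belief (N t : nat) (hobs : seq obs) (ha : seq bool) : 'cV[R]_B.+1 :=
  \col_(j < B.+1) (joint N t hobs ha (pred1 (nat_of_ord j)) / joint N t hobs ha predT).

Definition Lambda : 'M[R]_B.+1 :=
  \matrix_(i < B.+1, j < B.+1)
    (if i == j then (if nat_of_ord j == B then 1 else 1 - lam)
     else if nat_of_ord i == (nat_of_ord j).+1 then lam else 0).

Definition rho (j : nat) : 'cV[R]_B.+1 :=
  let k := maxn j 1 in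
  \col_(i < B.+1) (if nat_of_ord i == k.-1 then 1 - lam
                   else if nat_of_ord i == k then lam else 0).

End Model.

(* Main.v *)
Require Import Defs.
From mathcomp Require Import all_boot all_order all_algebra.
From mathcomp Require Import ring lra.
Set Implicit Arguments.
Unset Strict Implicit.
Unset Printing Implicit Defensive.
Import Order.TTheory GRing.Theory Num.Theory.
Local Open Scope ring_scope.

Lemma stateS B Dmax x0 acts ens k :
  state B Dmax x0 acts ens k.+1 = step B Dmax (state B Dmax x0 acts ens k) (nth false acts k) (nth false ens k).
Proof. by rewrite /state -addn1 iotaD cats1 foldl_rcons. Qed.

Lemma state_ext B Dmax x0 acts ens acts' ens' k :
  (forall i, (i < k)%N -> nth false acts i = nth false acts' i /\ nth false ens i = nth false ens' i) ->
  state B Dmax x0 acts ens k = state B Dmax x0 acts' ens' k.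
Proof.
elim: k => [//|k IH] H; rewrite !stateS IH; last by move=> i hi; apply: H; apply: ltnW.
by have [-> ->] := H k (ltnSn k).
Qed.

Lemma state_inv B Dmax (x : S0 B Dmax) acts ens k :
  let s := state B Dmax (decode x) acts ens k in (s.1.1 <= B)%N /\ (1 <= s.1.2)%N.
Proof.
elim: k => [|k IH] /=.
  by rewrite /state /=; split => //; rewrite -ltnS ltn_ord.
have hD : (0 < Dmax)%N by apply: leq_ltn_trans (ltn_ord x.1.2).
rewrite stateS; move: IH; rewrite /step.
case: (state _ _ _ _ _ k) => [[b D] bt] /= [_ _].
split; first exact: geq_minr.
by case: ifP => //; rewrite leq_min hD.
Qed.

Section Tup.
Variable N : nat.
Definition tflip (m : nat) (s : N.-tuple bool) : N.-tuple bool :=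
  [tuple (if nat_of_ord i == m then ~~ tnth s i else tnth s i) | i < N].

Lemma tflipK m : involutive (tflip m).
Proof.
move=> s; apply: eq_from_tnth => i; rewrite !tnth_mktuple.
by case: (_ == _) => //=; rewrite negbK.
Qed.

Lemma nth_tflip_neq m s i : i != m -> nth false (tflip m s) i = nth false s i.
Proof.
move=> him; case: (ltnP i N) => hi.
  by rewrite -(tnth_nth false _ (Ordinal hi)) tnth_mktuple /= (negbTE him) (tnth_nth false).
by rewrite !nth_default ?size_tuple.
Qed.

Lemma nth_tflip_eq m s : (m < N)%N -> nth false (tflip m s) m = ~~ nth false s m.
Proof.
move=> hm; by rewrite -(tnth_nth false _ (Ordinal hm)) tnth_mktuple /= eqxx (tnth_nth false).
Qed.
End Tup.

Section Model2.
Variables (R : realFieldType) (B Dmax : nat) (lam p : R) (pi : S0 B Dmax -> R)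
  (mu : seq obs -> seq bool -> R) (N : nat).
Local Notation Om := (Omega B Dmax N).

Definition flipE m (w : Om) : Om := (((w.1.1.1, tflip m w.1.1.2), w.1.2), w.2).
Definition flipR m (w : Om) : Om := ((w.1.1, tflip m w.1.2), w.2).
Definition flipA m (w : Om) : Om := (w.1, tflip m w.2).

Lemma flipEK m : involutive (flipE m).
Proof. by case=> [[[x e] r] a]; rewrite /flipE /= tflipK. Qed.
Lemma flipRK m : involutive (flipR m).
Proof. by case=> [[[x e] r] a]; rewrite /flipR /= tflipK. Qed.
Lemma flipAK m : involutive (flipA m).
Proof. by case=> [[[x e] r] a]; rewrite /flipA /= tflipK. Qed.

Definition agree k (w w' : Om) :=
  om_x w = om_x w' /\ forall i, (i < k)%N ->
   [/\ nth false (om_e w) i = nth false (om_e w') i,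
       nth false (om_r w) i = nth false (om_r w') i &
       nth false (om_a w) i = nth false (om_a w') i].

Lemma agree_le k j w w' : agree k w w' -> (j <= k)%N -> agree j w w'.
Proof. by move=> [hx h] hj; split=> // i hi; apply: h; apply: leq_trans hj. Qed.

Lemma agree_state k j w w' : agree k w w' -> (j <= k)%N -> om_state w j = om_state w' j.
Proof.
move=> [hx h] hj; rewrite /om_state hx; apply: state_ext => i hi.
by have [? ? ?] := h i (leq_trans hi hj).
Qed.

Lemma obs_hist_ext k (w w' : Om) :
  (forall j, (j < k)%N -> om_obs w j = om_obs w' j) -> obs_hist w k = obs_hist w' k.
Proof.
by move=> h; apply/eq_in_map => j; rewrite mem_iota add0n => /h.
Qed.

Lemma agree_obs k j w w' : agree k w w' -> (j < k)%N -> om_obs w j = om_obs w' j.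
Proof.
move=> ha hj; rewrite /om_obs (agree_state ha (ltnW hj)).
by case: ha => _ /(_ j hj) [_ -> _].
Qed.

Lemma agree_hist k w w' : agree k w w' -> obs_hist w k = obs_hist w' k.
Proof. by move=> ha; apply: obs_hist_ext => j; apply: agree_obs. Qed.

Lemma agree_histS k w w' : agree k w w' -> om_r w = om_r w' -> obs_hist w k.+1 = obs_hist w' k.+1.
Proof.
move=> ha hr; apply: obs_hist_ext => j; rewrite ltnS leq_eqVlt => /orP [/eqP ->|hj].
  by rewrite /om_obs (agree_state ha (leqnn k)) hr.
exact: agree_obs ha hj.
Qed.

Lemma agree_take k j w w' : agree k w w' -> (j <= k)%N -> take j (om_a w) = take j (om_a w').
Proof.
move=> [_ h] hj; apply: (@eq_from_nth _ false); first by rewrite !size_take /om_a !size_tuple.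
move=> i; rewrite size_take => hi.
have hij : (i < j)%N by apply: leq_trans hi _; apply: geq_minl.
rewrite !nth_take //.
by have [_ _ ->] := h i (leq_trans hij hj).
Qed.

Lemma agree_flipE m w : agree m w (flipE m w).
Proof. split=> // i hi; have him : i != m by rewrite neq_ltn hi.
  by split=> //; rewrite /om_e /= nth_tflip_neq. Qed.
Lemma agree_flipR m w : agree m w (flipR m w).
Proof. split=> // i hi; have him : i != m by rewrite neq_ltn hi.
  by split=> //; rewrite /om_r /= nth_tflip_neq. Qed.
Lemma agree_flipA m w : agree m w (flipA m w).
Proof. split=> // i hi; have him : i != m by rewrite neq_ltn hi.
  by split=> //; rewrite /om_a /= nth_tflip_neq. Qed.

Definition fac i (w : Om) : R :=
  bern lam (nth false (om_e w) i) * bern p (nth false (om_r w) i) *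
  bern (mu (obs_hist w i.+1) (take i (om_a w))) (nth false (om_a w) i).

Definition Wm k (w : Om) : R := pi (om_x w) * \prod_(i < k) fac i w.

Lemma weightE w : weight lam p pi mu w = Wm N w.
Proof. by []. Qed.

Lemma WmS k w : Wm k.+1 w = Wm k w * fac k w.
Proof. by rewrite /Wm big_ord_recr /= mulrA. Qed.

Lemma agree_Wm k w w' : agree k w w' -> Wm k w = Wm k w'.
Proof.
move=> ha; rewrite /Wm; case: (ha) => -> h; congr (_ * _); apply: eq_bigr => i _.
have [he hr hA] := h i (ltn_ord i).
rewrite /fac he hr hA (agree_take ha (ltnW (ltn_ord i))) (agree_hist (agree_le ha (ltn_ord i))) //.
Qed.

Lemma flip_half (s : Om -> Om) (Z Y : Om -> R) : involutive s ->
  (forall w, Z w + Z (s w) = Y w) -> \sum_w Z w = 2^-1 * \sum_w Y w.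
Proof.
move=> hs hZY.
have e : \sum_w Z w = \sum_w Z (s w) by apply: reindex_inj; apply: inv_inj.
have : \sum_w Y w = \sum_w Z w + \sum_w Z w.
  by rewrite {2}e -big_split; apply: eq_bigr => w _; rewrite -hZY.
move=> ->; lra.
Qed.

Lemma bernC (q : R) b : bern q b + bern q (~~ b) = 1.
Proof. by case: b; rewrite /bern /=; ring. Qed.

Lemma step_sum m (f : Om -> R) (g : bool -> R) : (m < N)%N ->
  (forall w w', agree m w w' -> f w = f w') ->
  \sum_w f w * g (nth false (om_r w) m) * Wm m.+1 w =
  2^-1 * (2^-1 * (2^-1 * ((g true * p + g false * (1 - p)) * \sum_w f w * Wm m w))).
Proof.
move=> hm hf.
rewrite (@flip_half (flipA m) _ (fun w => f w * g (nth false (om_r w) m) * Wm m w *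
   (bern lam (nth false (om_e w) m) * bern p (nth false (om_r w) m)))); last 2 first.
- exact: flipAK.
- move=> w; rewrite !WmS -(hf _ _ (agree_flipA m w)) -(agree_Wm (agree_flipA m w)).
  rewrite /fac (agree_histS (agree_flipA m w)) // -(agree_take (agree_flipA m w)) //.
  have -> : om_r (flipA m w) = om_r w by [].
  have -> : om_e (flipA m w) = om_e w by [].
  have -> : nth false (om_a (flipA m w)) m = ~~ nth false (om_a w) m by rewrite /om_a /= nth_tflip_eq.
  have hq := bernC (mu (obs_hist (flipA m w) m.+1) (take m (om_a w))) (nth false (om_a w) m).
  rewrite -[RHS]mulr1 -hq; ring.
congr (_ * _).
rewrite (@flip_half (flipE m) _ (fun w => f w * g (nth false (om_r w) m) * Wm m w *
   bern p (nth false (om_r w) m))); last 2 first.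
- exact: flipEK.
- move=> w; rewrite -(hf _ _ (agree_flipE m w)) -(agree_Wm (agree_flipE m w)).
  have -> : om_r (flipE m w) = om_r w by [].
  have -> : nth false (om_e (flipE m w)) m = ~~ nth false (om_e w) m by rewrite /om_e /= nth_tflip_eq.
  have hq := bernC lam (nth false (om_e w) m).
  rewrite -[RHS]mulr1 -hq; ring.
congr (_ * _).
rewrite (@flip_half (flipR m) _ (fun w => (g true * p + g false * (1 - p)) * (f w * Wm m w))); last 2 first.
- exact: flipRK.
- move=> w; rewrite -(hf _ _ (agree_flipR m w)) -(agree_Wm (agree_flipR m w)).
  have -> : nth false (om_r (flipR m w)) m = ~~ nth false (om_r w) m by rewrite /om_r /= nth_tflip_eq.
  by case: (nth false (om_r w) m); rewrite /bern /=; ring.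
by rewrite -mulr_sumr.
Qed.

Definition e8 : R := 2^-1 * (2^-1 * 2^-1).

Lemma tail_sum m (f : Om -> R) : (m <= N)%N ->
  (forall w w', agree m w w' -> f w = f w') ->
  \sum_w f w * weight lam p pi mu w = e8 ^+ (N - m) * \sum_w f w * Wm m w.
Proof.
move=> hmN hf.
have [k hk] : exists k, (m + k)%N = N by exists (N - m)%N; rewrite subnKC.
have -> : (N - m)%N = k by rewrite -hk addKn.
elim: k m hk hmN hf => [|k IH] m hk hmN hf.
  rewrite addn0 in hk; subst m.
  by rewrite expr0 mul1r; apply: eq_bigr => w _; rewrite weightE.
rewrite (IH m.+1); [ | by rewrite addSnnS | by rewrite -hk -addSnnS leq_addr |]; last first.
  by move=> w w' ha; apply: hf; apply: agree_le ha _.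
have hmN' : (m < N)%N by rewrite -hk -addSnnS leq_addr.
have := @step_sum m f (fun _ => 1) hmN' hf.
under eq_bigr do rewrite mulr1.
move=> ->; rewrite /e8 exprS; ring.
Qed.

Section Key.
Variables (hobs : seq obs) (ha : seq bool) (u : nat).
Hypothesis hu : (u.+2 <= N)%N.

Definition Hev (w : Om) : bool :=
  (obs_hist w u.+1 == take u.+1 hobs) && (take u (om_a w) == take u ha).
Definition qq : R := mu (take u.+1 hobs) (take u ha).

Lemma Hev_flip (s : Om -> Om) w : agree u w (s w) -> om_r w = om_r (s w) -> Hev (s w) = Hev w.
Proof. by move=> h hr; rewrite /Hev -(agree_histS h hr) -(agree_take h (leqnn u)). Qed.

Lemma Hev_mu w : Hev w -> mu (obs_hist w u.+1) (take u (om_a w)) = qq.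
Proof. by case/andP => /eqP -> /eqP ->. Qed.

Lemma Hev_agree w w' : agree u.+1 w w' -> Hev w = Hev w'.
Proof.
by move=> h; rewrite /Hev (agree_hist h) (agree_take h (leqnSn u)).
Qed.

Lemma key (a r : bool) (G : sstate -> bool -> R) :
  \sum_w (if Hev w && (nth false (om_a w) u == a) && (nth false (om_r w) u.+1 == r)
          then G (om_state w u) (nth false (om_e w) u) else 0) * weight lam p pi mu w
  = bern qq a * bern p r *
    \sum_w (if Hev w then bern lam true * G (om_state w u) true + bern lam false * G (om_state w u) false
            else 0) * weight lam p pi mu w.
Proof.
have hu1 : (u.+1 < N)%N by [].
rewrite (@tail_sum u.+2) //; last first.
  move=> w w' h; rewrite (Hev_agree (agree_le h (leqnSn _))) (agree_state h (leqW (leqnSn u))).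
  case: h => _ h; have [he _ hA] := h u (ltnW (ltnSn u.+1)); have [_ hr _] := h u.+1 (ltnSn _).
  by rewrite he hA hr.
rewrite (@tail_sum u.+1) //; last first; [|exact: ltnW|].
  move=> w w' h; rewrite (Hev_agree h) (agree_state h (leqnSn u)) //.
set f1 := fun w : Om => if Hev w && (nth false (om_a w) u == a) then G (om_state w u) (nth false (om_e w) u) else 0.
set g := fun x : bool => if x == r then (1 : R) else 0.
have -> : \sum_w (if Hev w && (nth false (om_a w) u == a) && (nth false (om_r w) u.+1 == r)
          then G (om_state w u) (nth false (om_e w) u) else 0) * Wm u.+2 w =
        \sum_w f1 w * g (nth false (om_r w) u.+1) * Wm u.+2 w.
  apply: eq_bigr => w _; rewrite /f1 /g.
  by case: (Hev w && _); case: (_ == r); rewrite /= ?mulr1 ?mulr0 ?mul0r.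
rewrite step_sum //; last first.
  move=> w w' h; rewrite /f1 (Hev_agree h) (agree_state h (leqnSn u)).
  case: h => _ h; have [he _ hA] := h u (ltnSn u).
  by rewrite he hA.
have -> : g true * p + g false * (1 - p) = bern p r by rewrite /g /bern; clear; case: r => /=; ring.
set Y := fun w : Om => if Hev w then (bern lam true * G (om_state w u) true +
          bern lam false * G (om_state w u) false) * Wm u w * bern p (nth false (om_r w) u) else 0.
have E1 : \sum_w f1 w * Wm u.+1 w = bern qq a * (2^-1 * (2^-1 * \sum_w Y w)).
  under eq_bigr do rewrite WmS.
  have hA : forall w, nth false (om_a (flipA u w)) u = ~~ nth false (om_a w) u.
    by move=> w; rewrite /om_a /= nth_tflip_eq // ltnW.
  have hE : forall w, nth false (om_e (flipE u w)) u = ~~ nth false (om_e w) u.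
    by move=> w; rewrite /om_e /= nth_tflip_eq // ltnW.
  rewrite (@flip_half (flipA u) _ (fun w => bern qq a * (if Hev w then G (om_state w u) (nth false (om_e w) u) * Wm u w * bern lam (nth false (om_e w) u) * bern p (nth false (om_r w) u) else 0))); last 2 first.
  - exact: flipAK.
  - move=> w; rewrite /f1 (Hev_flip (agree_flipA u w)) // -(agree_state (agree_flipA u w) (leqnn u)) -(agree_Wm (agree_flipA u w)).
    rewrite /fac -(agree_histS (agree_flipA u w)) // -(agree_take (agree_flipA u w)) // hA.
    have -> : om_e (flipA u w) = om_e w by [].
    have -> : om_r (flipA u w) = om_r w by [].
    case hH: (Hev w) => /=; last by ring.
    rewrite (Hev_mu hH); case Ea: a; case: (nth false (om_a w) u) => /=; ring.
  rewrite -mulr_sumr.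
  rewrite (@flip_half (flipE u) _ Y); last 2 first.
  - exact: flipEK.
  - move=> w; rewrite /Y (Hev_flip (agree_flipE u w)) // -(agree_state (agree_flipE u w) (leqnn u)) -(agree_Wm (agree_flipE u w)) hE.
    have -> : om_r (flipE u w) = om_r w by [].
    case: (Hev w) => /=; last by ring.
    case: (nth false (om_e w) u) => /=; ring.
  ring.
have E2 : \sum_w (if Hev w then bern lam true * G (om_state w u) true + bern lam false * G (om_state w u) false
            else 0) * Wm u.+1 w = 2^-1 * (2^-1 * \sum_w Y w).
  under eq_bigr do rewrite WmS.
  have hA : forall w, nth false (om_a (flipA u w)) u = ~~ nth false (om_a w) u.
    by move=> w; rewrite /om_a /= nth_tflip_eq // ltnW.
  have hE : forall w, nth false (om_e (flipE u w)) u = ~~ nth false (om_e w) u.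
    by move=> w; rewrite /om_e /= nth_tflip_eq // ltnW.
  rewrite (@flip_half (flipA u) _ (fun w => if Hev w then (bern lam true * G (om_state w u) true + bern lam false * G (om_state w u) false) * Wm u w * bern lam (nth false (om_e w) u) * bern p (nth false (om_r w) u) else 0)); last 2 first.
  - exact: flipAK.
  - move=> w; rewrite (Hev_flip (agree_flipA u w)) // -(agree_state (agree_flipA u w) (leqnn u)) -(agree_Wm (agree_flipA u w)).
    rewrite /fac -(agree_histS (agree_flipA u w)) // -(agree_take (agree_flipA u w)) // hA.
    have -> : om_e (flipA u w) = om_e w by [].
    have -> : om_r (flipA u w) = om_r w by [].
    case hH: (Hev w) => /=; last by ring.
    set qa := mu _ _.
    have hq := bernC qa (nth false (om_a w) u).
    rewrite -[RHS]mulr1 -hq; ring.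
  rewrite (@flip_half (flipE u) _ Y); last 2 first.
  - exact: flipEK.
  - move=> w; rewrite /Y (Hev_flip (agree_flipE u w)) // -(agree_state (agree_flipE u w) (leqnn u)) -(agree_Wm (agree_flipE u w)) hE.
    have -> : om_r (flipE u w) = om_r w by [].
    case: (Hev w) => /=; last by ring.
    case: (nth false (om_e w) u) => /=; rewrite /bern /=; ring.
  by [].
rewrite E1 E2.
have -> : (N - u.+1 = (N - u.+2).+1)%N by rewrite subnSK.
rewrite exprS /e8; ring.
Qed.

Lemma obs_histS (w : Om) k : obs_hist w k.+1 = rcons (obs_hist w k) (om_obs w k).
Proof. by rewrite /obs_hist -addn1 iotaD map_cat cats1. Qed.

Lemma om_stateS (w : Om) k : om_state w k.+1 =
  step B Dmax (om_state w k) (nth false (om_a w) k) (nth false (om_e w) k).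
Proof. by rewrite /om_state stateS. Qed.

Definition GP (P : pred nat) (s : sstate) (e : bool) : R :=
  let s' := step B Dmax s (nth false ha u) e in
  if [&& s'.1.2 == (nth (false,0%N,0%N) hobs u.+1).1.2, s'.2 == (nth (false,0%N,0%N) hobs u.+1).2
      & P s'.1.1] then 1 else 0.

Hypothesis hsz1 : size hobs = u.+2.
Hypothesis hsz2 : size ha = u.+1.

Lemma joint_split P : joint lam p pi mu N u.+2 hobs ha P =
  \sum_w (if Hev w && (nth false (om_a w) u == nth false ha u) &&
              (nth false (om_r w) u.+1 == (nth (false,0%N,0%N) hobs u.+1).1.1)
          then GP P (om_state w u) (nth false (om_e w) u) else 0) * weight lam p pi mu w.
Proof.
rewrite /joint; apply: eq_bigr => w _ /=.
have Eh : hobs = rcons (take u.+1 hobs) (nth (false,0%N,0%N) hobs u.+1).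
  by rewrite -take_nth ?hsz1 // -hsz1 take_size.
have Ea : ha = rcons (take u ha) (nth false ha u).
  by rewrite -take_nth ?hsz2 // -hsz2 take_size.
have Eta : take u.+1 (om_a w) = rcons (take u (om_a w)) (nth false (om_a w) u).
  by rewrite -take_nth // /om_a size_tuple ltnW.
rewrite {1}Eh {1}Ea Eta obs_histS !eqseq_rcons om_stateS /Hev /GP.
move: (nth (false,0%N,0%N) hobs u.+1) => [[r0 D0] bt0] /=.
rewrite /om_obs om_stateS /=.
case: (obs_hist w u.+1 == _); case: (take u _ == _) => //=; rewrite ?mul0r ?andbF //.
rewrite !xpair_eqE.
case: (nth false (om_a w) u =P nth false ha u) => [->|_]; last by rewrite !(andbF, andFb) /= mul0r.
case: (nth false (om_r w) u.+1 =P r0) => _ /=; last by rewrite mul0r.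
by rewrite -!andbA; case: ifP; rewrite ?mul1r ?mul0r.
Qed.

Lemma joint_t P : joint lam p pi mu N u.+1 (take u.+1 hobs) (take u ha) P =
  \sum_w (if Hev w then (if P (om_state w u).1.1 then 1 else 0) else 0) * weight lam p pi mu w.
Proof.
rewrite /joint; apply: eq_bigr => w _ /=; rewrite /Hev.
case: (obs_hist w u.+1 == _); case: (take u _ == _) => //=; rewrite ?mul0r //.
by case: ifP; rewrite ?mul1r ?mul0r.
Qed.

Lemma Hev_obs (w : Om) : Hev w -> om_obs w u = nth (false,0%N,0%N) hobs u.
Proof.
case/andP => /eqP h _.
have := congr1 (fun s => nth (false,0%N,0%N) s u) h.
rewrite nth_take // /obs_hist (nth_map 0%N) ?size_iota // nth_iota //.
Qed.
End Key.

End Model2.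

Section GGs.
Variables (R : realFieldType) (B Dmax : nat) (lam : R).
Definition ind (b : bool) : R := if b then 1 else 0.
Definition GG (P : pred nat) (a : bool) (D' j : nat) (s : sstate) (e : bool) : R :=
  let s' := step B Dmax s a e in
  if [&& s'.1.2 == D', s'.2 == j & P s'.1.1] then 1 else 0.
Definition GGs P a D' j s := bern lam true * GG P a D' j s true + bern lam false * GG P a D' j s false.

Lemma GG_false P D' j b D bt : (b <= B)%N ->
  GGs P false D' j (b, D, bt) =
  ind ((minn D.+1 Dmax == D') && (bt == j)) * (lam * ind (P (minn b.+1 B)) + (1 - lam) * ind (P b)).
Proof.
move=> hb; rewrite /GGs /GG /step /= !subn0 addn1 addn0 (minn_idPl hb) /ind.
case: (minn D.+1 Dmax == D'); case: (bt == j) => /=; try ring; by case: (P _); case: (P _); ring.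
Qed.

Lemma GG_true_gt P D' j b D bt : (1 < D')%N -> (1 <= B)%N ->
  GGs P true D' j (b, D, bt) =
  ind [&& b == 0%N, minn D.+1 Dmax == D' & bt == j] * (lam * ind (P 1%N) + (1 - lam) * ind (P 0%N)).
Proof.
move=> hD hB; rewrite /GGs /GG /step /= /ind.
case: b => [|b] /=.
  rewrite add0n !subn0 (minn_idPl hB) min0n.
  case: (minn D.+1 Dmax == D'); case: (bt == j) => /=; try ring; by case: (P _); case: (P _); ring.
by rewrite eq_sym (gtn_eqF hD) /=; ring.
Qed.

Lemma GG_true_1 P j b D bt : (1 <= D)%N -> (2 <= Dmax)%N -> (b <= B)%N ->
  GGs P true 1%N j (b, D, bt) =
  ind ((b == j) && (0 < b)%N) * (lam * ind (P b) + (1 - lam) * ind (P b.-1)).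
Proof.
move=> hD hDm hb; rewrite /GGs /GG /step /= /ind.
case: b hb => [|b] hb /=.
  have -> : (minn D.+1 Dmax == 1%N) = false.
    by apply/negbTE; rewrite neq_ltn; apply/orP; right; rewrite leq_min ltnS hD hDm.
  by rewrite andbF /=; ring.
rewrite addn0 addn1 subn1 /= (minn_idPl hb) subn1 /= (minn_idPl (ltnW hb)) andbT.
case: (b.+1 == j) => /=; try ring; by case: (P _); case: (P _); ring.
Qed.
End GGs.

Lemma Lam_expand (R : realFieldType) (B : nat) (lam : R) (i : 'I_B.+1) (b : nat) : (b <= B)%N ->
  lam * ind R (minn b.+1 B == i) + (1 - lam) * ind R (b == i) =
  \sum_(k < B.+1) Lambda B lam i k * ind R (b == k).
Proof.
move=> hb.
rewrite (bigD1 (inord b)) //= big1 ?addr0; last first.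
  move=> k hk; rewrite /ind; case: eqP => [e|_]; last by rewrite mulr0.
  by move: hk; rewrite -val_eqE /= inordK ?ltnS // e eqxx.
rewrite mxE inordK ?ltnS // eqxx /ind mulr1 -val_eqE /= inordK ?ltnS //.
move: (ltn_ord i); move: (nat_of_ord i) => n hn.
have [->|hbB] : b = B \/ (b < B)%N by rewrite ltn_neqAle hb andbT; case: eqP; [left|right].
  rewrite (minn_idPr (leqnSn B)) eqxx (ltn_eqF hn) (eq_sym B n).
  by case: (n == B); ring.
rewrite (minn_idPl hbB) (ltn_eqF hbB) (eq_sym b.+1 n) (eq_sym b n).
case: (eqVneq n b) => [->|hnb]; first by rewrite eq_sym (gtn_eqF (ltnSn b)); ring.

by case: (n == b.+1); ring.
Qed.

Theorem theorem1 (R : realFieldType) (B Dmax : nat) (lam p : R)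
  (pi : S0 B Dmax -> R) (mu : seq obs -> seq bool -> R)
  (hB : (1 <= B)%N) (hD : (2 <= Dmax)%N)
  (hlam : 0 <= lam <= 1) (hp : 0 <= p <= 1)
  (hpi0 : forall x, 0 <= pi x) (hpi1 : \sum_x pi x = 1)
  (hmu : forall ho ha, 0 <= mu ho ha <= 1)
  (N t : nat) (ht : (1 <= t)%N) (htN : (t.+1 <= N)%N)
  (hobs : seq obs) (ha : seq bool)
  (hsz1 : size hobs = t.+1) (hsz2 : size ha = t)
  (hpos : 0 < joint lam p pi mu N t.+1 hobs ha predT) :
  let beta := belief lam p pi mu N t (take t hobs) (take t.-1 ha) in
  let beta' := belief lam p pi mu N t.+1 hobs ha in
  let a := nth false ha t.-1 in
  let o := nth (false, 0%N, 0%N) hobs t in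
  [/\ (a = false -> beta' = Lambda B lam *m beta),
      (a = true -> (1 < o.1.2)%N -> beta' = rho B lam 0) &
      (a = true -> o.1.2 = 1%N -> (1 <= o.2 <= B)%N /\ beta' = rho B lam o.2)].
Proof.
destruct t as [|u]; first by [].
move=> beta beta' a o.
have hu : (u.+2 <= N)%N := htN.
pose J := fun P : pred nat => \sum_(w : Omega B Dmax N)
   (if Hev hobs ha u w then ind R (P (om_state w u).1.1) else 0) * weight lam p pi mu w.
have JTe : forall P, joint lam p pi mu N u.+1 (take u.+1 hobs) (take u.+1.-1 ha) P = J P.
  by move=> P; exact: joint_t.
pose C := bern (qq mu hobs ha u) a * bern p o.1.1.
have JSe : forall P, joint lam p pi mu N u.+2 hobs ha P =
   C * \sum_(w : Omega B Dmax N) (if Hev hobs ha u w then GGs B Dmax lam P a o.1.2 o.2 (om_state w u) else 0)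
        * weight lam p pi mu w.
  by move=> P; rewrite (joint_split lam p pi mu hu hsz1 hsz2); exact: key.
have Hw : forall w : Omega B Dmax N, Hev hobs ha u w ->
   om_state w u = ((om_state w u).1.1, (nth (false,0%N,0%N) hobs u).1.2, (nth (false,0%N,0%N) hobs u).2)
   /\ ((om_state w u).1.1 <= B)%N /\ (1 <= (om_state w u).1.2)%N.
  move=> w hH; have E := Hev_obs hH; rewrite -E /om_obs /=.
  have [h1 h2] := state_inv (om_x w) (om_a w) (om_e w) u.
  by split; [case: (om_state w u) => [[? ?] ?] | split].
have Jsc : forall (F : Omega B Dmax N -> R) c Q,
   (forall w, Hev hobs ha u w -> F w = c * ind R (Q (om_state w u).1.1)) ->
   \sum_(w : Omega B Dmax N) (if Hev hobs ha u w then F w else 0) * weight lam p pi mu w = c * J Q.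
  move=> F c Q hF; rewrite /J mulr_sumr; apply: eq_bigr => w _.
  by case hH: (Hev hobs ha u w); [rewrite hF // mulrA | rewrite mul0r mulr0].
have hpos' := hpos; rewrite JSe in hpos'.
have fin : forall (c S T : R), 0 < c * T -> c * S / (c * T) = S / T.
  move=> c S T h; have := lt0r_neq0 h; rewrite mulf_eq0 negb_or => /andP [h1 h2].
  by field; apply/andP.
have beta_e : forall (k : 'I_B.+1) (k0 : 'I_1), beta k k0 = J (pred1 (nat_of_ord k)) / J predT.
  by move=> k k0; rewrite /beta /belief mxE !JTe.
have beta'_e : forall (k : 'I_B.+1) (k0 : 'I_1), beta' k k0 = joint lam p pi mu N u.+2 hobs ha (pred1 (nat_of_ord k)) / joint lam p pi mu N u.+2 hobs ha predT.
  by move=> k k0; rewrite /beta' /belief mxE.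
split.
- move=> Ha.
  pose kap := ind R ((minn (nth (false,0%N,0%N) hobs u).1.2.+1 Dmax == o.1.2) && ((nth (false,0%N,0%N) hobs u).2 == o.2)).
  have K : forall P, joint lam p pi mu N u.+2 hobs ha P = C * kap * \sum_(w : Omega B Dmax N)
     (if Hev hobs ha u w then lam * ind R (P (minn (om_state w u).1.1.+1 B)) + (1 - lam) * ind R (P (om_state w u).1.1) else 0) * weight lam p pi mu w.
    move=> P; rewrite JSe -mulrA; congr (_ * _); rewrite mulr_sumr; apply: eq_bigr => w _.
    case hH: (Hev hobs ha u w); last by rewrite !mul0r mulr0.
    have [E [hb _]] := Hw w hH.
    by rewrite [in LHS]E Ha GG_false // mulrA.
  have KT : joint lam p pi mu N u.+2 hobs ha predT = C * kap * J predT.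
    rewrite K; congr (_ * _); rewrite -[J predT]mul1r; apply: Jsc => w hH; rewrite /ind /=; ring.
  have KI : forall i : 'I_B.+1, joint lam p pi mu N u.+2 hobs ha (pred1 (nat_of_ord i)) =
      C * kap * \sum_(k < B.+1) Lambda B lam i k * J (pred1 (nat_of_ord k)).
    move=> i; rewrite K; congr (_ * _).
    transitivity (\sum_(w : Omega B Dmax N) \sum_(k < B.+1) Lambda B lam i k *
       ((if Hev hobs ha u w then ind R ((om_state w u).1.1 == k) else 0) * weight lam p pi mu w)).
      apply: eq_bigr => w _; case hH: (Hev hobs ha u w); last first.
        by rewrite /= mul0r big1 // => k _; rewrite mulr0.
      have [_ [hb _]] := Hw w hH.
      rewrite /= (Lam_expand lam i hb) mulr_suml; apply: eq_bigr => k _; ring.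
    by rewrite exchange_big; apply: eq_bigr => k _; rewrite /J mulr_sumr.
  apply/matrixP => i k0; rewrite beta'_e mxE KT KI.
  rewrite [RHS](eq_bigr (fun j : 'I_B.+1 => Lambda B lam i j * J (pred1 (nat_of_ord j)) * (J predT)^-1)); last by move=> j _; rewrite beta_e mulrA.
  rewrite -mulr_suml fin //.
  by rewrite -KT.
- move=> Ha hD'.
  pose kap := ind R ((minn (nth (false,0%N,0%N) hobs u).1.2.+1 Dmax == o.1.2) && ((nth (false,0%N,0%N) hobs u).2 == o.2)).
  have K : forall P, joint lam p pi mu N u.+2 hobs ha P =
      C * kap * (lam * ind R (P 1%N) + (1 - lam) * ind R (P 0%N)) * J (pred1 0%N).
    move=> P; rewrite JSe (Jsc (fun w => GGs B Dmax lam P a o.1.2 o.2 (om_state w u))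
      (kap * (lam * ind R (P 1%N) + (1 - lam) * ind R (P 0%N))) (pred1 0%N)); first by rewrite !mulrA.
    move=> w hH.
    have [E [hb _]] := Hw w hH.
    rewrite [in LHS]E Ha GG_true_gt // /kap /ind /=.
    case: ((om_state w u).1.1 == 0%N) => /=; last by ring.
    by case: (_ && _); ring.
  have cT : lam * ind R (predT 1%N) + (1 - lam) * ind R (predT 0%N) = 1 by rewrite /ind /=; ring.
  have hX : 0 < C * kap * J (pred1 0%N) by move: hpos; rewrite K cT mulr1.
  apply/matrixP => i k0; rewrite beta'_e !K cT mulr1.
  rewrite (_ : C * kap * _ * _ = C * kap * J (pred1 0%N) * (lam * ind R (pred1 (nat_of_ord i) 1%N) + (1 - lam) * ind R (pred1 (nat_of_ord i) 0%N))); last by ring.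
  rewrite mulrAC divff ?mul1r; last exact: lt0r_neq0.
  rewrite /rho mxE /=.
  by case: (nat_of_ord i) => [|[|n]] /=; rewrite /ind /=; ring.
- move=> Ha hD1.
  have K : forall P, joint lam p pi mu N u.+2 hobs ha P =
      C * \sum_(w : Omega B Dmax N) (if Hev hobs ha u w then
        ind R (((om_state w u).1.1 == o.2) && (0 < (om_state w u).1.1)%N) *
        (lam * ind R (P (om_state w u).1.1) + (1 - lam) * ind R (P (om_state w u).1.1.-1)) else 0)
        * weight lam p pi mu w.
    move=> P; rewrite JSe; congr (_ * _); apply: eq_bigr => w _.
    case hH: (Hev hobs ha u w) => //.
    have [E [hb hD0]] := Hw w hH.
    have hD0' : (1 <= (nth (false,0%N,0%N) hobs u).1.2)%N by move: hD0; rewrite {1}E.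
    by rewrite [in LHS]E Ha hD1 GG_true_1.
  have hj : (1 <= o.2 <= B)%N.
    apply/negPn/negP => hn.
    have : joint lam p pi mu N u.+2 hobs ha predT = 0.
      rewrite K big1 ?mulr0 // => w _; case hH: (Hev hobs ha u w); last by rewrite mul0r.
      have [_ [hb _]] := Hw w hH.
      suff -> : ((om_state w u).1.1 == o.2) && (0 < (om_state w u).1.1)%N = false by rewrite /ind !mul0r.
      apply/negP => /andP [/eqP e hb0]; move/negP: hn; apply; by rewrite -e hb0 hb.
    by move=> e; move: hpos; rewrite e ltxx.
  split => //.
  have hj0 : (0 < o.2)%N by case/andP: hj.
  have K2 : forall P, joint lam p pi mu N u.+2 hobs ha P =
      C * (lam * ind R (P o.2) + (1 - lam) * ind R (P o.2.-1)) * J (pred1 o.2).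
    move=> P; rewrite K -mulrA; congr (_ * _); apply: Jsc => w hH.
    rewrite /ind /=; case: eqP => [->|_] /=; first by rewrite hj0; ring.
    by ring.
  have cT : lam * ind R (predT o.2) + (1 - lam) * ind R (predT o.2.-1) = 1 by rewrite /ind /=; ring.
  have hX : 0 < C * J (pred1 o.2) by move: hpos; rewrite K2 cT mulr1.
  apply/matrixP => i k0; rewrite beta'_e !K2 cT mulr1.
  rewrite (_ : C * _ * _ = C * J (pred1 o.2) * (lam * ind R (pred1 (nat_of_ord i) o.2) + (1 - lam) * ind R (pred1 (nat_of_ord i) o.2.-1))); last by ring.
  rewrite mulrAC divff ?mul1r; last exact: lt0r_neq0.
  rewrite /rho mxE (maxn_idPl hj0) /=.
  move: hj0; case: (o.2) => [//|j] _ /=.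
  case: (eqVneq (nat_of_ord i) j) => [->|h] /=.
    by rewrite (gtn_eqF (ltnSn j)) /ind; ring.
  rewrite eq_sym /ind.
  by case: (_ == _); ring.
Qed.
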